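(* Consider the resilient constrained consensus algorithm described in the context, with $\bigcap_{i\in\mathcal H}\mathcal X_i=\{x^*\}$. For $i\in\mathcal H$ and time $t$, define $$e_i(t)=\sum_{j\in\mathcal F_i(t)}(x_i(t)-x_{ji}(t))-\sum_{j\in\mathcal H_i\setminus\mathcal L_i(t)}(x_i(t)-x_{ji}(t))$$ and $$S_i(t)=\tfrac12\sum_{j\in\mathcal H}\|x_i(t)-x_j(t)\|^2+\langle x_i(t)-x^*,e_i(t)\rangle.$$ Then for every $i\in\mathcal H$ and every $t$, $$S_i(t)\ge\tfrac12\sum_{j\in\mathcal L_i(t)}\|x_i(t)-x_j(t)\|^2-2\sum_{j\in\mathcal H_i\setminus\mathcal L_i(t)}\|x_i(t)-x^*\|^2,$$ and $$\sum_{i\in\mathcal H}\phi_i(t)=\sum_{i\in\mathcal H}S_i(t).$$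
   Context: Setting: There are $n$ agents $\mathcal N=\{1,\dots,n\}$ on a complete communication graph. A known integer $f\ge0$ is given. The agents are partitioned into normal agents $\mathcal H$ and Byzantine agents $\mathcal F$ with $|\mathcal F|\le f$. Each $i\in\mathcal H$ has a closed convex $\mathcal X_i\subseteq\mathbb R^m$. Algorithm: normal agent $i$ has state $x_i(t)\in\mathbb R^m$ and at time $t$ receives $x_{ji}(t)$ from each $j\ne i$. If $j\in\mathcal H$, then $x_{ji}(t)=x_j(t)$. If $j\in\mathcal F$, the value is arbitrary and may differ per recipient. Agent $i$ discards the $f$ received vectors with largest $\|x_i(t)-x_{ji}(t)\|$, with ties broken arbitrarily. The remaining $n-f-1$ senders form $\mathcal M_i(t)\subseteq\mathcal N\setminus\{i\}$. The update is $$x_i(t+1)=\mathrm P_{\mathcal X_i}\Big[x_i(t)+\alpha\sum_{j\in\mathcal M_i(t)}(x_{ji}(t)-x_i(t))\Big],$$ with $\alpha>0$ and $\mathrm P_{\mathcal C}$ the Euclidean projection. Notation: - $\mathcal H_i=\mathcal H\setminus\{i\}$; - $\mathcal L_i(t)=\mathcal M_i(t)\cap\mathcal H_i$; - $\mathcal F_i(t)=\mathcal M_i(t)\setminus\mathcal L_i(t)$; - $\phi_i(t)=\big\langle x_i(t)-x^*,\sum_{j\in\mathcal M_i(t)}(x_i(t)-x_{ji}(t))\big\rangle$; - $\langle x,y\rangle=x^\top y$. *)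

(* Defs.v *)
From mathcomp Require Import all_boot all_order all_algebra.
From mathcomp Require Import all_classical all_reals all_analysis.
Set Implicit Arguments. Unset Strict Implicit. Unset Printing Implicit Defensive.
Import Order.TTheory GRing.Theory Num.Theory.
Import numFieldTopology.Exports.
Local Open Scope ring_scope.
Local Open Scope classical_set_scope.

Definition dotv {R : realType} {m : nat} (u v : 'rV[R]_m) : R :=
  \sum_(k < m) u ord0 k * v ord0 k.

Definition sqnorm {R : realType} {m : nat} (u : 'rV[R]_m) : R := dotv u u.

Definition is_proj {R : realType} {m : nat} (C : set 'rV[R]_m) (y p : 'rV[R]_m)
  : Prop :=
  C p /\ forall z, C z -> sqnorm (y - p) <= sqnorm (y - z).

(* e_i(t), given the normal set H, the kept set M = M_i(t), agent i,
   its state xi = x_i(t) and the received vectors recv j = x_{ji}(t).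
   L_i = M :&: (H :\ i), F_i = M :\: L_i, H_i \ L_i = (H :\ i) :\: L_i. *)
Definition e_vec {R : realType} {m n : nat} (H M : {set 'I_n}) (i : 'I_n)
  (xi : 'rV[R]_m) (recv : 'I_n -> 'rV[R]_m) : 'rV[R]_m :=
  let L := M :&: (H :\ i) in
  \sum_(j in M :\: L) (xi - recv j) - \sum_(j in (H :\ i) :\: L) (xi - recv j).

Definition S_val {R : realType} {m n : nat} (H M : {set 'I_n}) (i : 'I_n)
  (xs : 'rV[R]_m) (x : 'I_n -> 'rV[R]_m) (recv : 'I_n -> 'rV[R]_m) : R :=
  2^-1 * \sum_(j in H) sqnorm (x i - x j) + dotv (x i - xs) (e_vec H M i (x i) recv).

Definition phi_val {R : realType} {m n : nat} (M : {set 'I_n}) (xi xs : 'rV[R]_m)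
  (recv : 'I_n -> 'rV[R]_m) : R :=
  dotv (xi - xs) (\sum_(j in M) (xi - recv j)).

(* Main.v *)
Require Import Defs.
From mathcomp Require Import all_boot all_order all_algebra.
From mathcomp Require Import all_classical all_reals all_analysis.
From mathcomp Require Import ring lra zify.
Import Order.TTheory GRing.Theory Num.Theory.
Import numFieldTopology.Exports.
Local Open Scope ring_scope.
Local Open Scope classical_set_scope.

Section Dot.
Variables (R : realType) (m : nat).
Implicit Types u v w : 'rV[R]_m.

Lemma dotvC u v : dotv u v = dotv v u.
Proof. by apply: eq_bigr => k _; rewrite mulrC. Qed.

Lemma dotvDr u v w : dotv u (v + w) = dotv u v + dotv u w.
Proof. by rewrite /dotv -big_split; apply: eq_bigr => k _; rewrite !mxE mulrDr. Qed.

Lemma dotvBr u v w : dotv u (v - w) = dotv u v - dotv u w.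
Proof.
rewrite /dotv -sumrB; apply: eq_bigr => k _; rewrite !mxE; ring.
Qed.

Lemma dotv_sumr (I : finType) (A : {set I}) u (F : I -> 'rV[R]_m) :
  dotv u (\sum_(j in A) F j) = \sum_(j in A) dotv u (F j).
Proof.
rewrite /dotv; under eq_bigr do rewrite summxE mulr_sumr.
by rewrite exchange_big.
Qed.

Lemma sqnorm_ge0 u : 0 <= sqnorm u.
Proof. by apply: sumr_ge0 => k _; rewrite -expr2 sqr_ge0. Qed.

Lemma dotv_lb u w : - sqnorm u - 4^-1 * sqnorm w <= dotv u w.
Proof.
rewrite /sqnorm /dotv mulr_sumr -sumrN -sumrB; apply: ler_sum => k _.
have := sqr_ge0 (u ord0 k + 2^-1 * w ord0 k). nra.
Qed.

Lemma dotv_sym (a b s : 'rV[R]_m) :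
  dotv (a - s) (a - b) + dotv (b - s) (b - a) = sqnorm (a - b).
Proof.
rewrite /sqnorm /dotv -big_split; apply: eq_bigr => k _; rewrite !mxE; simpl; move: (a ord0 k) (b ord0 k) (s ord0 k) => x y z; ring.
Qed.

Lemma sqnorm0 : sqnorm (0 : 'rV[R]_m) = 0 :> R.
Proof. by apply: big1 => k _; rewrite mxE mul0r. Qed.
Lemma dotv_ub u w : dotv u w <= sqnorm u + 4^-1 * sqnorm w.
Proof.
rewrite /sqnorm /dotv mulr_sumr -big_split; apply: ler_sum => k _.
have h : forall p q : R, p * q <= p * p + 4^-1 * (q * q).
  by move=> p q; have := sqr_ge0 (p - 2^-1 * q); nra.
exact: h.
Qed.
End Dot.

Section Main.
Variables (R : realType) (m n : nat).

Lemma setL (H Mi : {set 'I_n}) i :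
  Mi :&: (H :\ i) = (H :\ i) :&: Mi.
Proof. by rewrite finset.setIC. Qed.

Lemma setF (H Mi : {set 'I_n}) i :
  Mi :\: (Mi :&: (H :\ i)) = Mi :\: (H :\ i).
Proof.
apply/setP => j; rewrite !inE.
by case: (j \in Mi); case: (j == i); case: (j \in H).
Qed.

Lemma setHc (H Mi : {set 'I_n}) i :
  (H :\ i) :\: (Mi :&: (H :\ i)) = (H :\ i) :\: Mi.
Proof.
apply/setP => j; rewrite !inE.
by case: (j \in Mi); case: (j == i); case: (j \in H).
Qed.

Lemma sumM (Mi H : {set 'I_n}) i (G : 'I_n -> R) :
  \sum_(j in Mi) G j = \sum_(j in Mi :&: (H :\ i)) G j
                      + \sum_(j in Mi :\: (Mi :&: (H :\ i))) G j.
Proof.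
rewrite (big_setID (Mi :&: (H :\ i))) /=; congr (_ + _).
by apply: eq_bigl => j; rewrite !inE; case: (j \in Mi).
Qed.

Lemma sumH (H Mi : {set 'I_n}) i (G : 'I_n -> R) : i \in H ->
  \sum_(j in H) G j = G i + \sum_(j in Mi :&: (H :\ i)) G j
                      + \sum_(j in (H :\ i) :\: (Mi :&: (H :\ i))) G j.
Proof.
move=> iH; rewrite (big_setD1 i) //= (big_setID (Mi :&: (H :\ i))) /= addrA.
congr (_ + _ + _).
apply: eq_bigl => j; rewrite !inE.
by case: (j \in Mi); case: (j == i); case: (j \in H).
Qed.

Lemma part1 (H Mi : {set 'I_n}) i (xs : 'rV[R]_m) (x r : 'I_n -> 'rV[R]_m) :
  i \in H -> i \notin Mi -> (#|Mi| <= #|H| - 1)%N ->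
  (forall j, j \in H -> r j = x j) ->
  (forall j k, j \in Mi -> k \notin Mi -> k != i ->
        sqnorm (x i - r j) <= sqnorm (x i - r k)) ->
  S_val H Mi i xs x r
       >= 2^-1 * \sum_(j in Mi :&: (H :\ i)) sqnorm (x i - x j)
          - 2 * \sum_(j in (H :\ i) :\: (Mi :&: (H :\ i))) sqnorm (x i - xs).
Proof.
move=> iH iM cardM hr htr.
set L := Mi :&: (H :\ i).
set F := Mi :\: L.
set Hc := (H :\ i) :\: L.
set u := x i - xs.
have hHc : forall k, k \in Hc -> [/\ k \in H, k \notin Mi & k != i].
  move=> k; rewrite !inE.
  by case: (k \in Mi); case: (k == i); case: (k \in H).
have hF : forall j, j \in F -> j \in Mi.
  by move=> j; rewrite !inE; case: (j \in Mi).
rewrite /S_val /e_vec -/L -/F -/Hc (sumH H Mi i _ iH) -/L -/Hc subrr sqnorm0 add0r.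
rewrite dotvBr !dotv_sumr sumr_const.
have -> : \sum_(j in Hc) dotv u (x i - r j) = \sum_(j in Hc) dotv u (x i - x j).
  by apply: eq_bigr => k /hHc [kH _ _]; rewrite hr.
set a := #|F|. set b := #|Hc|.
set A := \sum_(j in F) sqnorm (x i - r j).
set B := \sum_(j in Hc) sqnorm (x i - x j).
set q := sqnorm u.
have h1 : - (q *+ a) - 4^-1 * A <= \sum_(j in F) dotv u (x i - r j).
  rewrite /A mulr_sumr -sumr_const -sumrN -sumrB; apply: ler_sum => j _.
  exact: dotv_lb.
have h2 : \sum_(j in Hc) dotv u (x i - x j) <= q *+ b + 4^-1 * B.
  rewrite /B mulr_sumr -sumr_const -big_split; apply: ler_sum => j _.
  exact: dotv_ub.
have hab : (a <= b)%N.
  have e1 := cardsID (H :\ i) Mi.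
  have e2 := cardsID Mi (H :\ i).
  have e3 := cardsD1 i H.
  rewrite iH /= in e3.
  rewrite /a /b /F /Hc /L setF setHc.
  have e5 : #|Mi :&: (H :\ i)| = #|(H :\ i) :&: Mi| by rewrite finset.setIC.
  move: e1 e2 e3 e5 cardM.
  move: #|Mi :&: (H :\ i)| #|(H :\ i) :&: Mi| #|Mi :\: (H :\ i)| #|H :\ i :\: Mi|.
  move: #|Mi| #|H :\ i| #|H|.
  clear; move=> *; lia.
have hq : 0 <= q by exact: sqnorm_ge0.
have hAB : A <= B.
  have hpair : forall j k, j \in F -> k \in Hc ->
      sqnorm (x i - r j) <= sqnorm (x i - x k).
    move=> j k /hF jM /hHc [kH kM ki]; rewrite -(hr k kH); exact: htr.
  have hB : 0 <= B by apply: sumr_ge0 => k _; exact: sqnorm_ge0.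
  have hm : A *+ b <= B *+ a.
    have -> : B *+ a = \sum_(j in F) B by rewrite sumr_const.
    rewrite /A -sumrMnl; apply: ler_sum => j jF.
    have -> : sqnorm (x i - r j) *+ b = \sum_(k in Hc) sqnorm (x i - r j)
      by rewrite sumr_const.
    apply: ler_sum => k kH; exact: hpair.
  case: (posnP b) => [b0|bpos].
    have a0 : a = 0%N by move: hab; rewrite b0; case: (a).
    have F0 : F = finset.set0 by apply/eqP; rewrite -cards_eq0; apply/eqP.
    by rewrite /A F0 big_set0.
  have : A *+ b <= B *+ b.
    apply: (le_trans hm); rewrite -(mulr_natr B a) -(mulr_natr B b).
    by apply: ler_wpM2l => //; rewrite ler_nat.
  rewrite -(mulr_natr A b) -(mulr_natr B b) ler_pM2r //.
  by rewrite ltr0n.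
have hqab : q *+ a <= q *+ b.
  by rewrite -(mulr_natr q a) -(mulr_natr q b); apply: ler_wpM2l => //; rewrite ler_nat.
have hB0 : 0 <= \sum_(j in L) sqnorm (x i - x j).
  by apply: sumr_ge0 => k _; exact: sqnorm_ge0.
have hqb : 0 <= q *+ b by rewrite mulrn_wge0.
rewrite -/u.
move: h1 h2 hAB hqab hB0 hqb hq.
move: (q *+ a) (q *+ b) => qa qb.
move: (\sum_(j in F) _) (\sum_(j in Hc) dotv _ _) (\sum_(j in L) _) => s1 s2 s3.
lra.
Qed.

Lemma dotv0r (u : 'rV[R]_m) : dotv u 0 = 0.
Proof. by apply: big1 => k _; rewrite mxE mulr0. Qed.

Lemma part2 (H Mi : {set 'I_n}) i (xs : 'rV[R]_m) (x r : 'I_n -> 'rV[R]_m) :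
  i \in H -> (forall j, j \in H -> r j = x j) ->
  phi_val Mi (x i) xs r = dotv (x i - xs) (\sum_(j in H) (x i - x j))
                          + dotv (x i - xs) (e_vec H Mi i (x i) r).
Proof.
move=> iH hr.
rewrite /phi_val /e_vec dotvBr !dotv_sumr (sumM Mi H i) (sumH H Mi i _ iH).
rewrite subrr dotv0r add0r.
have -> : \sum_(j in Mi :&: (H :\ i)) dotv (x i - xs) (x i - r j)
        = \sum_(j in Mi :&: (H :\ i)) dotv (x i - xs) (x i - x j).
  apply: eq_bigr => j; rewrite !inE => /andP [_ /andP [_ jH]]; by rewrite hr.
have -> : \sum_(j in (H :\ i) :\: (Mi :&: (H :\ i))) dotv (x i - xs) (x i - r j)
        = \sum_(j in (H :\ i) :\: (Mi :&: (H :\ i))) dotv (x i - xs) (x i - x j).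
  apply: eq_bigr => j; rewrite !inE => /andP [_ /andP [_ jH]]; by rewrite hr.
move: (\sum_(j in _ :\: _) dotv _ (x i - r j)) => s1.
move: (\sum_(j in Mi :&: _) _) => s2.
move: (\sum_(j in _ :\: _) _) => s3.
lra.
Qed.

Lemma symsum (H : {set 'I_n}) (xs : 'rV[R]_m) (x : 'I_n -> 'rV[R]_m) :
  \sum_(i in H) dotv (x i - xs) (\sum_(j in H) (x i - x j))
  = \sum_(i in H) 2^-1 * \sum_(j in H) sqnorm (x i - x j).
Proof.
under eq_bigr do rewrite dotv_sumr.
rewrite -mulr_sumr.
have -> : \sum_(i in H) \sum_(j in H) sqnorm (x i - x j)
   = \sum_(i in H) \sum_(j in H) dotv (x i - xs) (x i - x j)
   + \sum_(i in H) \sum_(j in H) dotv (x j - xs) (x j - x i).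
  rewrite -big_split; apply: eq_bigr => i _; rewrite -big_split.
  by apply: eq_bigr => j _; rewrite -(@dotv_sym _ _ _ _ xs).
rewrite [X in _ = _ * (_ + X)]exchange_big /=.
move: (\sum_(i in H) _) => T.
lra.
Qed.

End Main.

Theorem lemma2 (R : realType) (n m f : nat) (H : {set 'I_n})
  (X : 'I_n -> set 'rV[R]_m) (xs : 'rV[R]_m) (alpha : R)
  (x : nat -> 'I_n -> 'rV[R]_m) (msg : nat -> 'I_n -> 'I_n -> 'rV[R]_m)
  (M : nat -> 'I_n -> {set 'I_n}) :
  (#|~: H| <= f)%N ->
  (forall i, i \in H -> closed (X i) /\ convex_set (X i)) ->
  (forall y, (forall i, i \in H -> X i y) <-> y = xs) ->
  0 < alpha ->
  (* messages from normal agents are their true states *)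
  (forall t j i, j \in H -> msg t j i = x t j) ->
  (* trimming: M_i(t) is N \ {i} minus f senders of largest distance *)
  (forall t i, i \in H ->
     i \notin M t i /\ (#|M t i| + f)%N = (n - 1)%N /\
     (forall j k, j \in M t i -> k \notin M t i -> k != i ->
        sqnorm (x t i - msg t j i) <= sqnorm (x t i - msg t k i))) ->
  (* update rule *)
  (forall t i, i \in H ->
     is_proj (X i)
       (x t i + alpha *: \sum_(j in M t i) (msg t j i - x t i))
       (x t.+1 i)) ->
  forall t,
    (forall i, i \in H ->
       S_val H (M t i) i xs (x t) (fun j => msg t j i)
       >= 2^-1 * \sum_(j in M t i :&: (H :\ i)) sqnorm (x t i - x t j)
          - 2 * \sum_(j in (H :\ i) :\: (M t i :&: (H :\ i))) sqnorm (x t i - xs))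
    /\
    \sum_(i in H) phi_val (M t i) (x t i) xs (fun j => msg t j i)
    = \sum_(i in H) S_val H (M t i) i xs (x t) (fun j => msg t j i).
Proof.
move=> hcard _ _ _ hmsg htrim _ t; split.
  move=> i iH; have [iM [hc hcl]] := htrim t i iH.
  apply: part1 => //; last by move=> j jH; exact: hmsg.
  have e1 := cardsCs H; rewrite card_ord in e1.
  have e2 := cardsD1 i H; rewrite iH /= in e2.
  move: hcard hc e1 e2; move: #|~: H| #|M t i| #|H| #|H :\ i| => p q r s.
  clear; move=> *; lia.
rewrite (eq_bigr (fun i => dotv (x t i - xs) (\sum_(j in H) (x t i - x t j))
     + dotv (x t i - xs) (e_vec H (M t i) i (x t i) (fun j => msg t j i)))); last first.
  by move=> i iH; apply: part2 => // j jH; exact: hmsg.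
rewrite big_split /= symsum /S_val big_split /=.
by [].
Qed.
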